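(* Let $S$ be an infinite set and $\mathcal{F}\subseteq 2^S$ a family closed under finite unions and finite intersections. Let $\mathbf{A}=(A_1,\dots,A_k)$ be a classification problem with $k\ge 2$. Then $\mathbf{A}\in\mathit{class}_k(\mathcal{F})$ if and only if $(A_i,A_j)\in\mathit{class}_2(\mathcal{F})$ for all $1\le i\ne j\le k$.
   Context: A classification problem is a vector $(A_1,\dots,A_k)$, $k\ge1$, of pairwise disjoint infinite subsets of $S$. For vectors $\mathbf{B}=(B_1,\dots,B_m)$ and $\mathbf{Q}=(Q_1,\dots,Q_k)$, $\mathbf{B}\leq\mathbf{Q}$ means $1\le m\le k$ and there is an injective $\sigma:\{1,\dots,m\}\to\{1,\dots,k\}$ with $B_i\subseteq Q_{\sigma(i)}$ for all $i$. An $\mathcal{F}$-partition is a vector $(Q_1,\dots,Q_k)$ of pairwise disjoint sets $Q_i\in\mathcal{F}$ with $Q_1\cup\dots\cup Q_k=S$. $\mathit{class}_k(\mathcal{F})$ is the set of classification problems $\mathbf{A}$ of length $k$ for which an $\mathcal{F}$-partition $\mathbf{Q}$ of length $k$ with $\mathbf{A}\leq\mathbf{Q}$ exists. *)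

(* Defs.v *)
(* Sets over a carrier type S are predicates S -> Prop.
   A vector (X_1,...,X_k) of subsets is represented as a function
   X : nat -> S -> Prop together with its length k; index i (0-based)
   ranges over i < k, so X i corresponds to X_{i+1}. *)
From Stdlib Require Import List.

Definition subset {S : Type} (A B : S -> Prop) : Prop := forall x, A x -> B x.

Definition infinite_set {S : Type} (A : S -> Prop) : Prop :=
  ~ exists l : list S, forall x, A x -> In x l.

Definition disjoint {S : Type} (A B : S -> Prop) : Prop :=
  forall x, A x -> B x -> False.

(* closure of F under finite (binary, hence all nonempty finite)
   unions and intersections *)
Definition closed_union_inter {S : Type} (F : (S -> Prop) -> Prop) : Prop :=
  (forall A B, F A -> F B -> F (fun x => A x \/ B x)) /\
  (forall A B, F A -> F B -> F (fun x => A x /\ B x)).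

Definition classification_problem {S : Type} (k : nat) (A : nat -> S -> Prop) : Prop :=
  1 <= k /\
  (forall i, i < k -> infinite_set (A i)) /\
  (forall i j, i < k -> j < k -> i <> j -> disjoint (A i) (A j)).

Definition vec_le {S : Type} (m : nat) (B : nat -> S -> Prop)
    (k : nat) (Q : nat -> S -> Prop) : Prop :=
  1 <= m /\ m <= k /\
  exists sigma : nat -> nat,
    (forall i, i < m -> sigma i < k) /\
    (forall i j, i < m -> j < m -> sigma i = sigma j -> i = j) /\
    (forall i, i < m -> subset (B i) (Q (sigma i))).

Definition F_partition {S : Type} (F : (S -> Prop) -> Prop) (k : nat)
    (Q : nat -> S -> Prop) : Prop :=
  (forall i, i < k -> F (Q i)) /\
  (forall i j, i < k -> j < k -> i <> j -> disjoint (Q i) (Q j)) /\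
  (forall x : S, exists i, i < k /\ Q i x).

Definition class_k {S : Type} (F : (S -> Prop) -> Prop) (k : nat)
    (A : nat -> S -> Prop) : Prop :=
  classification_problem k A /\
  exists Q : nat -> S -> Prop, F_partition F k Q /\ vec_le k A k Q.

Definition pair_vec {S : Type} (X Y : S -> Prop) : nat -> S -> Prop :=
  fun n => match n with 0 => X | _ => Y end.

(* Main.v *)
Require Import Defs.
From Stdlib Require Import List.
From Stdlib Require Import Lia Arith Classical ClassicalEpsilon.

Fixpoint bigcap {S : Type} (f : nat -> S -> Prop) (l : list nat) : S -> Prop :=
  match l with
  | nil => fun _ => True
  | a :: l' => match l' with
               | nil => f a
               | _ => fun x => f a x /\ bigcap f l' x
               end
  end.

Fixpoint bigcup {S : Type} (f : nat -> S -> Prop) (l : list nat) : S -> Prop :=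
  match l with
  | nil => fun _ => False
  | a :: l' => match l' with
               | nil => f a
               | _ => fun x => f a x \/ bigcup f l' x
               end
  end.

Lemma bigcap_iff {S : Type} (f : nat -> S -> Prop) l x :
  bigcap f l x <-> forall j, In j l -> f j x.
Proof.
  induction l as [|a l IH]; simpl.
  - split; [intros _ j []|auto].
  - destruct l as [|b l'].
    + simpl. split; [intros H j [<-|[]]; auto | intros H; apply H; auto].
    + split.
      * intros [Ha Hl] j [<-|Hj]; auto. apply IH; auto.
      * intros H; split; [apply H; auto|]. apply IH; intros; apply H; auto.
Qed.

Lemma bigcup_iff {S : Type} (f : nat -> S -> Prop) l x :
  bigcup f l x <-> exists j, In j l /\ f j x.
Proof.
  induction l as [|a l IH]; simpl.
  - split; [intros []| intros [j [[] _]]].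
  - destruct l as [|b l'].
    + simpl. split; [intros H; exists a; auto | intros [j [[<-|[]] H]]; auto].
    + split.
      * intros [Ha|Hl]; [exists a; auto|]. apply IH in Hl.
        destruct Hl as [j [Hj H]]; exists j; auto.
      * intros [j [[<-|Hj] H]]; auto. right; apply IH; exists j; auto.
Qed.

Lemma bigcap_F {S : Type} (F : (S -> Prop) -> Prop) f l :
  closed_union_inter F -> l <> nil -> (forall j, In j l -> F (f j)) ->
  F (bigcap f l).
Proof.
  intros [HU HI]. induction l as [|a l IH]; [congruence|].
  intros _ H. simpl. destruct l as [|b l'].
  - apply H; simpl; auto.
  - apply HI; [apply H; simpl; auto|]. apply IH; [congruence|].
    intros; apply H; simpl; auto.
Qed.

Lemma bigcup_F {S : Type} (F : (S -> Prop) -> Prop) f l :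
  closed_union_inter F -> l <> nil -> (forall j, In j l -> F (f j)) ->
  F (bigcup f l).
Proof.
  intros [HU HI]. induction l as [|a l IH]; [congruence|].
  intros _ H. simpl. destruct l as [|b l'].
  - apply H; simpl; auto.
  - apply HU; [apply H; simpl; auto|]. apply IH; [congruence|].
    intros; apply H; simpl; auto.
Qed.

Definition others (k i : nat) : list nat :=
  filter (fun j => negb (Nat.eqb j i)) (seq 0 k).

Lemma in_others k i j : In j (others k i) <-> j < k /\ j <> i.
Proof.
  unfold others. rewrite filter_In, in_seq.
  destruct (Nat.eqb_spec j i); simpl; split; intuition lia.
Qed.

Lemma others_nonnil k i : 2 <= k -> others k i <> nil.
Proof.
  intros Hk E.
  destruct (Nat.eq_dec i 0) as [->|Hi].
  - assert (H : In 1 (others k 0)) by (apply in_others; lia).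
    rewrite E in H; destruct H.
  - assert (H : In 0 (others k i)) by (apply in_others; lia).
    rewrite E in H; destruct H.
Qed.

Theorem lemma2p3 (S : Type) (F : (S -> Prop) -> Prop) (k : nat)
    (A : nat -> S -> Prop) :
  infinite_set (fun _ : S => True) ->
  closed_union_inter F ->
  classification_problem k A ->
  2 <= k ->
  (class_k F k A <->
   forall i j, i < k -> j < k -> i <> j ->
     class_k F 2 (pair_vec (A i) (A j))).
Proof.
  intros _ HF HA Hk. pose proof HA as [_ [Hinf Hdis]]. split.
  - intros [_ [Q [[QF [Qd Qc]] [_ [_ [sg [sgk [sgi sgs]]]]]]]] i j Hi Hj Hij.
    split.
    + split; [lia|]. split.
      * intros [|[|n]] Hn; simpl; [apply Hinf; auto|apply Hinf; auto|lia].
      * intros [|[|a]] [|[|b]] Ha Hb Hab; simpl; try lia;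
          intros x H1 H2; [apply (Hdis i j Hi Hj Hij x)|apply (Hdis j i Hj Hi) with x]; auto.
    + exists (pair_vec (Q (sg i)) (bigcup Q (others k (sg i)))). split.
      * split; [|split].
        -- intros [|[|n]] Hn; simpl; [apply QF; auto| |lia].
           apply bigcup_F; auto; [apply others_nonnil; auto|].
           intros l Hl; apply in_others in Hl; apply QF; lia.
        -- assert (D : disjoint (Q (sg i)) (bigcup Q (others k (sg i)))).
           { intros x H1 H2. apply bigcup_iff in H2.
             destruct H2 as [l [Hl H2]]. apply in_others in Hl.
             apply (Qd (sg i) l) with x; auto; try lia. }
           intros [|[|a]] [|[|b]] Ha Hb Hab; simpl; try lia; auto.
           intros x H1 H2; apply (D x); auto.
        -- intros x. destruct (Qc x) as [l [Hl Hx]].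
           destruct (Nat.eq_dec l (sg i)) as [->|Hne].
           ++ exists 0; simpl; auto.
           ++ exists 1; split; [lia|]; simpl. apply bigcup_iff.
              exists l; split; auto; apply in_others; lia.
      * split; [lia|]. split; [lia|]. exists (fun n => n).
        split; [auto|]. split; [auto|].
        intros [|[|n]] Hn; simpl; [apply sgs; auto| |lia].
        intros x Hx. apply bigcup_iff. exists (sg j). split.
        -- apply in_others. split; [apply sgk; auto|].
           intros E; apply Hij; apply sgi; auto.
        -- apply sgs; auto.
  - intros H.
    assert (Hex : forall i j, exists PP : (S -> Prop) * (S -> Prop),
      i < j < k -> F (fst PP) /\ F (snd PP) /\ disjoint (fst PP) (snd PP) /\
      (forall x, fst PP x \/ snd PP x) /\ subset (A i) (fst PP) /\
      subset (A j) (snd PP)).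
    { intros i j. destruct (classic (i < j < k)) as [Hij|Hn];
        [|exists (A i, A j); intros; contradiction].
      destruct (H i j) as [_ [Q [[QF [Qd Qc]] [_ [_ [sg [sgk [sgi sgs]]]]]]]];
        try lia.
      assert (s0 := sgk 0 ltac:(lia)). assert (s1 := sgk 1 ltac:(lia)).
      assert (s01 : sg 0 <> sg 1) by (intros E; specialize (sgi 0 1); lia).
      assert (Cov : forall x, Q 0 x \/ Q 1 x).
      { intros x; destruct (Qc x) as [[|[|l]] [Hl Hx]]; auto; lia. }
      assert (Dj : disjoint (Q 0) (Q 1)) by (apply Qd; lia).
      destruct (sg 0) as [|[|]] eqn:E0; [|destruct (sg 1) as [|[|]] eqn:E1|lia].
      - assert (E1 : sg 1 = 1) by lia.
        exists (Q 0, Q 1); intros _; simpl; split; [|split; [|split; [|split; [|split]]]].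
        + apply QF; lia. + apply QF; lia. + exact Dj. + exact Cov.
        + pose proof (sgs 0 ltac:(lia)) as G; rewrite E0 in G; exact G.
        + pose proof (sgs 1 ltac:(lia)) as G; rewrite E1 in G; exact G.
      - exists (Q 1, Q 0); intros _; simpl; repeat split.
        + apply QF; lia. + apply QF; lia.
        + intros x a b; apply (Dj x); auto.
        + intros x; destruct (Cov x); auto.
        + pose proof (sgs 0 ltac:(lia)) as G; rewrite E0 in G; exact G.
        + pose proof (sgs 1 ltac:(lia)) as G; rewrite E1 in G; exact G.
      - lia. - lia. }
    pose (PP := fun i j => proj1_sig (constructive_indefinite_description _ (Hex i j))).
    assert (HPP : forall i j, i < j < k -> F (fst (PP i j)) /\ F (snd (PP i j)) /\
      disjoint (fst (PP i j)) (snd (PP i j)) /\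
      (forall x, fst (PP i j) x \/ snd (PP i j) x) /\
      subset (A i) (fst (PP i j)) /\ subset (A j) (snd (PP i j))).
    { intros i j; exact (proj2_sig (constructive_indefinite_description _ (Hex i j))). }
    clearbody PP.
    pose (D := fun i j => if i <? j then fst (PP i j) else snd (PP j i)).
    assert (DF : forall i j, i < k -> j < k -> i <> j -> F (D i j)).
    { intros i j Hi Hj Hij; unfold D; destruct (Nat.ltb_spec i j);
        [apply HPP|apply HPP]; lia. }
    assert (DA : forall i j, i < k -> j < k -> i <> j -> subset (A i) (D i j)).
    { intros i j Hi Hj Hij; unfold D; destruct (Nat.ltb_spec i j);
        [apply HPP|apply HPP]; lia. }
    assert (Dd : forall i j x, i < k -> j < k -> i <> j -> D i j x -> D j i x -> False).
    { intros i j x Hi Hj Hij; unfold D.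
      destruct (Nat.ltb_spec i j); destruct (Nat.ltb_spec j i); try lia.
      - intros a b; apply (proj1 (proj2 (proj2 (HPP i j ltac:(lia)))) x); auto.
      - intros a b; apply (proj1 (proj2 (proj2 (HPP j i ltac:(lia)))) x); auto. }
    assert (Dc : forall i j x, i < k -> j < k -> i <> j -> D i j x \/ D j i x).
    { intros i j x Hi Hj Hij; unfold D.
      destruct (Nat.ltb_spec i j); destruct (Nat.ltb_spec j i); try lia.
      - apply (HPP i j ltac:(lia)).
      - destruct (proj1 (proj2 (proj2 (proj2 (HPP j i ltac:(lia))))) x); auto. }
    pose (R := fun i => bigcap (D i) (others k i)).
    pose (Last := bigcap (fun i' => bigcup (fun j => D j i') (others k i'))
                         (seq 0 (k - 1))).
    pose (Q := fun i => if i <? k - 1 then R i else Last).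
    assert (RF : forall i, i < k -> F (R i)).
    { intros i Hi; apply bigcap_F; auto; [apply others_nonnil; auto|].
      intros j Hj; apply in_others in Hj; apply DF; lia. }
    assert (LF : F Last).
    { apply bigcap_F; auto.
      - destruct k as [|[|k']]; [lia|lia|]; simpl; congruence.
      - intros i Hi; apply in_seq in Hi. apply bigcup_F; auto;
          [apply others_nonnil; auto|].
        intros j Hj; apply in_others in Hj; apply DF; lia. }
    split; [exact HA|]. exists Q. split; [split; [|split]|].
    + intros i Hi; unfold Q; destruct (Nat.ltb_spec i (k-1)); auto.
    + assert (RR : forall i x, i < k - 1 -> R i x -> Last x -> False).
      { intros i x Hi H1 H2. unfold Last in H2. rewrite bigcap_iff in H2.
        destruct (proj1 (bigcup_iff _ _ _) (H2 i ltac:(apply in_seq; lia)))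
          as [j [Hj Dji]].
        apply in_others in Hj. unfold R in H1. rewrite bigcap_iff in H1.
        apply (Dd j i x); try lia; auto. apply H1. apply in_others; lia. }
      intros i j Hi Hj Hij x; unfold Q; clear H.
      destruct (Nat.ltb_spec i (k-1)); destruct (Nat.ltb_spec j (k-1)).
      * intros H1 H2. unfold R in H1, H2. rewrite bigcap_iff in H1, H2.
        apply (Dd i j x); auto; [apply H1|apply H2]; apply in_others; lia.
      * intros H1 H2; apply (RR i x); auto.
      * intros H1 H2; apply (RR j x); auto.
      * lia.
    + intros x. destruct (classic (exists i, i < k - 1 /\ R i x)) as [[i [Hi Hx]]|Hn].
      * exists i; split; [lia|]. unfold Q; destruct (Nat.ltb_spec i (k-1)); [auto|lia].
      * exists (k-1); split; [lia|]. unfold Q; destruct (Nat.ltb_spec (k-1) (k-1)); [lia|].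
        unfold Last; apply bigcap_iff. intros i Hi; apply in_seq in Hi.
        apply bigcup_iff.
        assert (HnR : ~ R i x) by (intros HR; apply Hn; exists i; split; [lia|auto]).
        unfold R in HnR; rewrite bigcap_iff in HnR.
        apply not_all_ex_not in HnR. destruct HnR as [j Hj].
        apply imply_to_and in Hj. destruct Hj as [Hj Hnd].
        exists j; split; auto. apply in_others in Hj.
        destruct (Dc i j x); try lia; [contradiction|auto].
    + split; [lia|]. split; [lia|]. exists (fun n => n).
      split; [auto|]. split; [auto|].
      intros i Hi x Hx. unfold Q; destruct (Nat.ltb_spec i (k-1)).
      * unfold R; apply bigcap_iff. intros j Hj; apply in_others in Hj.
        apply (DA i j); auto; lia.
      * unfold Last; apply bigcap_iff. intros i' Hi'; apply in_seq in Hi'.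
        apply bigcup_iff. exists i; split; [apply in_others; lia|].
        apply (DA i i'); auto; lia.
Qed.
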